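(* Let $m\ge2$. Then $|U_{\beta,m}|\ge\aleph_0$ for every $\beta\in(\mathcal{G}(m),m+1]$.
   Context: For $\beta\in(1,m+1]$ and $x\in I_{\beta,m}=[0,\frac{m}{\beta-1}]$, $\Sigma_{\beta,m}(x)=\{(\epsilon_i)\in\{0,\ldots,m\}^{\mathbb{N}}:\sum_{i\ge1}\epsilon_i\beta^{-i}=x\}$, and $U_{\beta,m}=\{x\in I_{\beta,m}:|\Sigma_{\beta,m}(x)|=1\}$. $\mathcal{G}(m)=k+1$ if $m=2k$ and $\mathcal{G}(m)=\frac{k+1+\sqrt{k^2+6k+5}}{2}$ if $m=2k+1$. *)

(* Defs.v *)
From Stdlib Require Import Reals Lra Lia.
Open Scope R_scope.

(* A digit sequence eps : nat -> nat, where eps i stands for the paper's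
   epsilon_{i+1} (paper indexes from 1). *)
Definition digits (m : nat) (eps : nat -> nat) : Prop :=
  forall i, (eps i <= m)%nat.

Definition expansion_value (beta : R) (eps : nat -> nat) (x : R) : Prop :=
  infinite_sum (fun i => INR (eps i) / beta ^ (S i)) x.

Definition in_Sigma (beta : R) (m : nat) (x : R) (eps : nat -> nat) : Prop :=
  digits m eps /\ expansion_value beta eps x.

Definition in_I (beta : R) (m : nat) (x : R) : Prop :=
  0 <= x <= INR m / (beta - 1).

Definition in_U (beta : R) (m : nat) (x : R) : Prop :=
  in_I beta m x /\
  exists eps, in_Sigma beta m x eps /\
    forall eps', in_Sigma beta m x eps' -> forall i, eps' i = eps i.

Definition G (m : nat) : R :=
  let k := INR (Nat.div2 m) in
  if Nat.even m then k + 1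
  else (k + 1 + sqrt (k ^ 2 + 6 * k + 5)) / 2.

(* Main.v *)
Require Import Defs.
From Stdlib Require Import Reals Lra Lia.
From Coquelicot Require Import Coquelicot.
Open Scope R_scope.

Section S.
Variable (m : nat) (beta : R).
Hypothesis Hb : 1 < beta.

Definition term (d : nat -> nat) i := INR (d i) / beta ^ (S i).
Definition V d := Series (term d).
Definition geo i := INR m / beta * (/ beta) ^ i.

Lemma geo_is : is_series geo (INR m / (beta - 1)).
Proof.
  assert (H : Rabs (/ beta) < 1).
  { rewrite Rabs_pos_eq. rewrite <- Rinv_1; apply Rinv_lt_contravar; lra. left; apply Rinv_0_lt_compat; lra. }
  pose proof (is_series_scal_l (INR m / beta) _ _ (is_series_geom _ H)) as H2.
  unfold geo. replace (INR m / (beta - 1)) with (scal (INR m / beta) (/ (1 - / beta))).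
  exact H2.
  unfold scal; simpl; unfold mult; simpl. field. lra.
Qed.

Lemma term_bound d : digits m d -> forall n, 0 <= term d n <= geo n.
Proof.
  intros Hd n. unfold term, geo.
  assert (0 < beta ^ S n) by (apply pow_lt; lra).
  split. apply Rdiv_le_0_compat; [apply pos_INR | lra].
  rewrite pow_inv.
  simpl. unfold Rdiv. rewrite Rinv_mult.
  replace (INR m * / beta * / beta ^ n) with (INR m * (/ beta * / beta ^ n)) by ring.
  apply Rmult_le_compat_r. 
  apply Rmult_le_pos; left; apply Rinv_0_lt_compat; try lra. apply pow_lt; lra.
  apply le_INR, Hd.
Qed.

Lemma ex_term d : digits m d -> ex_series (term d).
Proof.
  intros Hd. apply (@ex_series_le R_AbsRing R_CompleteNormedModule _ geo).
  intros n. destruct (term_bound d Hd n). change (norm (term d n)) with (Rabs (term d n)).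
  rewrite Rabs_pos_eq; lra.
  exists (INR m / (beta - 1)). apply geo_is.
Qed.

Lemma V_bounds d : digits m d -> 0 <= V d <= INR m / (beta - 1).
Proof.
  intros Hd. split.
  - replace 0 with (Series (fun n => 0 * term d n)).
    apply Series_le. intros n; destruct (term_bound d Hd n); lra.
    apply ex_term; auto.
    rewrite Series_scal_l; ring.
  - rewrite <- (is_series_unique _ _ geo_is). apply Series_le.
    apply term_bound; auto. exists (INR m / (beta - 1)). apply geo_is.
Qed.

Lemma V_shift d : digits m d -> V d = (INR (d 0%nat) + V (fun i => d (S i))) / beta.
Proof.
  intros Hd. unfold V. rewrite Series_incr_1 by (apply ex_term; auto).
  replace (Series (fun k => term d (S k))) with (Series (fun k => / beta * term (fun i => d (S i)) k)).
  rewrite Series_scal_l. unfold term. simpl. field. lra.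
  apply Series_ext. intros n. unfold term. simpl. field. split. apply pow_nonzero; lra. lra.
Qed.

Lemma V_ext d e : (forall i, d i = e i) -> V d = V e.
Proof. intros H. apply Series_ext. intros n; unfold term; rewrite H; auto. Qed.

Lemma V_sigma d x : in_Sigma beta m x d -> x = V d.
Proof.
  intros [Hd Hs]. unfold expansion_value in Hs. apply is_series_Reals in Hs.
  symmetry; apply is_series_unique. exact Hs.
Qed.

Lemma sigma_V d : digits m d -> in_Sigma beta m (V d) d.
Proof.
  intros Hd. split; auto. unfold expansion_value. apply is_series_Reals.
  apply Series_correct, ex_term; auto.
Qed.

Variables (a b : nat).
Hypothesis Hab : (a + b = m)%nat.
Hypothesis Hale : (a <= b)%nat.
Hypothesis Hb1 : (1 <= b)%nat.
Hypothesis Hq : beta ^ 2 - INR b * beta - INR a - 1 > 0.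

Definition Z (n : nat) (i : nat) : nat :=
  if (i <? n)%nat then 0%nat else if Nat.even (i - n) then a else b.
Definition Bs (i : nat) : nat := if Nat.even i then b else a.

Lemma Z_dig n : digits m (Z n).
Proof. intros i. unfold Z. destruct (i <? n)%nat; [lia|]. destruct (Nat.even _); lia. Qed.
Lemma Bs_dig : digits m Bs.
Proof. intros i. unfold Bs. destruct (Nat.even _); lia. Qed.

Lemma Z_shiftS n i : Z (S n) (S i) = Z n i.
Proof. reflexivity. Qed.
Lemma Z_shift0 i : Z 0 (S i) = Bs i.
Proof. unfold Z, Bs. rewrite Nat.sub_0_r. change ((S i <? 0)%nat) with false. cbv beta iota.
  rewrite Nat.even_succ, <- Nat.negb_even.
  destruct (Nat.even i); reflexivity. Qed.
Lemma Bs_shift i : Bs (S i) = Z 0 i.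
Proof. unfold Z, Bs. rewrite Nat.sub_0_r. change ((i <? 0)%nat) with false. cbv beta iota.
  rewrite Nat.even_succ, <- Nat.negb_even.
  destruct (Nat.even i); reflexivity. Qed.

Definition vA := V (Z 0).
Definition vB := V Bs.

Lemma vA_eq : vA = (INR a + vB) / beta.
Proof. unfold vA. rewrite V_shift by apply Z_dig. unfold vB. rewrite (V_ext _ Bs) by apply Z_shift0.
  reflexivity. Qed.
Lemma vB_eq : vB = (INR b + vA) / beta.
Proof. unfold vB. rewrite V_shift by apply Bs_dig. unfold vA. rewrite (V_ext _ (Z 0)) by apply Bs_shift.
  reflexivity. Qed.

Lemma vals : vA < 1 /\ vB < 1 /\ vA + vB = INR m / (beta - 1) /\ 0 < vA.
Proof.
  pose proof vA_eq as E1. pose proof vB_eq as E2.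
  assert (F1 : beta * vA = INR a + vB) by (rewrite E1; field; lra).
  assert (F2 : beta * vB = INR b + vA) by (rewrite E2; field; lra).
  assert (Hm : INR m = INR a + INR b) by (rewrite <- Hab, plus_INR; ring).
  assert (Hle : INR a <= INR b) by (apply le_INR; auto).
  assert (Ha0 : 0 <= INR a) by apply pos_INR.
  assert (Hb0 : 0 <= INR b) by apply pos_INR.
  assert (G1 : vA * (beta^2 - 1) = INR a * beta + INR b) by nra.
  assert (G2 : vB * (beta^2 - 1) = INR b * beta + INR a) by nra.
  assert (Hbpos : 0 < beta ^ 2 - 1) by nra.
  assert (INR b > 0).
  { apply lt_0_INR; lia. }
  split; [|split; [|split]].
  - nra.
  - nra.
  - assert (K : (vA+vB)*(beta-1) = INR a + INR b) by lra. rewrite Hm, <- K. field. lra.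
  - nra.
Qed.

Lemma VZS n : V (Z (S n)) = V (Z n) / beta.
Proof. rewrite V_shift by apply Z_dig. rewrite (V_ext _ (Z n)) by (intros; apply Z_shiftS).
  simpl. field. lra. Qed.

Lemma VZ_le n : V (Z n) <= vA.
Proof.
  induction n. unfold vA; lra.
  rewrite VZS. pose proof (V_bounds _ (Z_dig n)).
  apply Rle_trans with (V (Z n)); auto.
  unfold Rdiv. rewrite <- (Rmult_1_r (V (Z n))) at 2. apply Rmult_le_compat_l. lra.
  rewrite <- Rinv_1. left; apply Rinv_lt_contravar; lra.
Qed.

Lemma first_digit d e : digits m d -> digits m e -> V d = V e ->
  V (fun i => e (S i)) < 1 ->
  ((0 < e 0%nat)%nat -> V (fun i => e (S i)) > INR m / (beta - 1) - 1) -> d 0%nat = e 0%nat.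
Proof.
  intros Hd He HV H1 H2.
  rewrite (V_shift d Hd), (V_shift e He) in HV.
  assert (K : INR (d 0%nat) + V (fun i => d (S i)) = INR (e 0%nat) + V (fun i => e (S i))).
  { apply (Rmult_eq_reg_r (/ beta)). exact HV. apply Rinv_neq_0_compat; lra. }
  assert (Hsd : digits m (fun i => d (S i))) by (intros i; apply Hd).
  pose proof (V_bounds _ Hsd) as Bd.
  destruct (Compare_dec.lt_eq_lt_dec (d 0%nat) (e 0%nat)) as [[L|L]|L]; auto; exfalso.
  - assert (0 < e 0%nat)%nat by lia. apply le_INR in L. rewrite S_INR in L.
    specialize (H2 H). lra.
  - apply le_INR in L. rewrite S_INR in L.
    lra.
Qed.

Definition C (e : nat -> nat) := (exists n, forall i, e i = Z n i) \/ (forall i, e i = Bs i).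

Lemma C_props e : C e ->
  digits m e /\ C (fun i => e (S i)) /\ V (fun i => e (S i)) < 1 /\
  ((0 < e 0%nat)%nat -> V (fun i => e (S i)) > INR m / (beta - 1) - 1).
Proof.
  pose proof vals as [VA [VB [VS VP]]].
  intros [[n Hn]|Hn].
  - split. intros i; rewrite Hn; apply Z_dig.
    destruct n as [|n].
    + assert (E : V (fun i => e (S i)) = vB).
      { unfold vB. apply V_ext. intros i. rewrite Hn. apply Z_shift0. }
      split. right. intros i. rewrite Hn. apply Z_shift0.
      rewrite E. split. lra. intros _. lra.
    + assert (E : V (fun i => e (S i)) = V (Z n)).
      { apply V_ext. intros i. rewrite Hn. apply Z_shiftS. }
      split. left. exists n. intros i. rewrite Hn. apply Z_shiftS.
      rewrite E. pose proof (VZ_le n). split. lra.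
      intros Hz. rewrite Hn in Hz. unfold Z in Hz. simpl in Hz. lia.
  - split. intros i; rewrite Hn; apply Bs_dig.
    assert (E : V (fun i => e (S i)) = vA).
    { unfold vA. apply V_ext. intros i. rewrite Hn. apply Bs_shift. }
    split. left. exists 0%nat. intros i. rewrite Hn. apply Bs_shift.
    rewrite E. split. lra. intros _. lra.
Qed.

Lemma uniq j : forall d e, C e -> digits m d -> V d = V e -> d j = e j.
Proof.
  induction j; intros d e He Hd HV; destruct (C_props e He) as [De [Cs [T1 T2]]].
  - apply first_digit; auto.
  - assert (H0 : d 0%nat = e 0%nat) by (apply first_digit; auto).
    apply (IHj (fun i => d (S i)) (fun i => e (S i))); auto.
    intros i; apply Hd.
    rewrite (V_shift d Hd), (V_shift e De), H0 in HV.
    apply (Rmult_eq_reg_r (/ beta)) in HV. lra. apply Rinv_neq_0_compat; lra.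
Qed.

Lemma VZ_U n : in_U beta m (V (Z n)).
Proof.
  split. apply V_bounds, Z_dig.
  exists (Z n). split. apply sigma_V, Z_dig.
  intros e' He' i. pose proof (V_sigma _ _ He') as E.
  apply uniq. left; exists n; auto. apply He'. auto.
Qed.

Lemma VZ_inj n1 n2 : V (Z n1) = V (Z n2) -> n1 = n2.
Proof.
  assert (F : forall n, V (Z n) = vA / beta ^ n).
  { induction n. simpl. unfold vA. field. rewrite VZS, IHn. simpl. field. split; [apply pow_nonzero|]; lra. }
  pose proof vals as [_ [_ [_ VP]]].
  intros H. rewrite !F in H. unfold Rdiv in H.
  apply Rmult_eq_reg_l in H; [|lra].
  destruct (Nat.lt_total n1 n2) as [L|[L|L]]; auto; exfalso.
  - pose proof (Rlt_pow beta _ _ Hb L).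
    pose proof (pow_lt beta n1 ltac:(lra)). pose proof (pow_lt beta n2 ltac:(lra)).
    pose proof (Rinv_lt_contravar _ _ (Rmult_lt_0_compat _ _ H1 H2) H0). lra.
  - pose proof (Rlt_pow beta _ _ Hb L).
    pose proof (pow_lt beta n1 ltac:(lra)). pose proof (pow_lt beta n2 ltac:(lra)).
    pose proof (Rinv_lt_contravar _ _ (Rmult_lt_0_compat _ _ H2 H1) H0). lra.
Qed.
End S.

Theorem proposition4p3 (m : nat) (beta : R) :
  (2 <= m)%nat ->
  G m < beta <= INR m + 1 ->
  exists f : nat -> R,
    (forall n1 n2, f n1 = f n2 -> n1 = n2) /\
    (forall n, in_U beta m (f n)).
Proof.
  intros Hm [HG _].
  set (k := Nat.div2 m).
  pose proof (Nat.div2_odd m) as Dm. fold k in Dm.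
  set (b := (m - k)%nat).
  assert (Hab : (k + b = m)%nat) by (unfold b; lia).
  unfold G in HG. fold k in HG.
  assert (Hk : (1 <= k)%nat).
  { destruct (Nat.odd m); simpl in Dm; lia. }
  assert (Hk' : 1 <= INR k) by (apply (le_INR 1); auto).
  destruct (Nat.even m) eqn:Ev.
  - assert (Od : Nat.odd m = false) by (rewrite <- Nat.negb_even, Ev; auto).
    rewrite Od in Dm. simpl in Dm.
    assert (Eb : b = k) by (unfold b; lia).
    assert (Hb : 1 < beta) by lra.
    assert (Hq : beta ^ 2 - INR b * beta - INR k - 1 > 0) by (rewrite Eb; nra).
    exists (fun n => V beta (Z k b n)). split.
    + intros n1 n2. apply (VZ_inj m beta Hb k b Hab); auto; try lia.
    + intros n. apply (VZ_U m beta Hb k b Hab); auto; try lia.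
  - assert (Od : Nat.odd m = true) by (rewrite <- Nat.negb_even, Ev; auto).
    rewrite Od in Dm. simpl in Dm.
    assert (Eb : b = S k) by (unfold b; lia).
    set (s := sqrt (INR k ^ 2 + 6 * INR k + 5)) in HG.
    assert (Hs0 : 0 <= s) by apply sqrt_pos.
    assert (Hs2 : s * s = INR k ^ 2 + 6 * INR k + 5) by (apply sqrt_sqrt; nra).
    assert (Hb : 1 < beta) by lra.
    assert (Hq : beta ^ 2 - INR b * beta - INR k - 1 > 0).
    { rewrite Eb, S_INR.
      assert (2 * beta - (INR k + 1) > s) by lra. nra. }
    exists (fun n => V beta (Z k b n)). split.
    + intros n1 n2. apply (VZ_inj m beta Hb k b Hab); auto; try lia.
    + intros n. apply (VZ_U m beta Hb k b Hab); auto; try lia.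
Qed.
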